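(* Let $1\le K<d$ be integers and $T_\lambda$ as below. For $\lambda\in(0,1)$ let $\bar F_\lambda$ solve $\bar F'(w)=T_\lambda(\bar F(w))-\bar F(w)$, $\bar F(0)=\lambda$, let $\mathbb E[W_\lambda]=\frac1\lambda\int_0^\infty T_\lambda(\bar F_\lambda(w))\,dw$ and $$p_\lambda=1-\sum_{j=0}^{K-1}\frac{K-j}{K}\binom dj(1-\lambda)^j\lambda^{d-j}.$$ Then $$\lim_{\lambda\to0^+}-\frac{\mathbb E[W_\lambda]}{\log(p_\lambda)}=\frac1{d-K+1}\qquad\text{and}\qquad\lim_{\lambda\to1^-}-\frac{\mathbb E[W_\lambda]}{\log(p_\lambda)}=\frac K{d-K}.$$
   Context: $T_\lambda(u)=\frac{\lambda}{K}\sum_{j=0}^{K-1}(K-j)\binom{d}{j}u^{d-j}(1-u)^j$ (LL($d,K$) policy, exponential(1) job sizes); $p_\lambda$ is the probability that a job is assigned to an idle server. *)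

(* Defs.v *)
From Stdlib Require Import Reals.
From Coquelicot Require Import Coquelicot.
Open Scope R_scope.

Definition Tl (d K : nat) (l u : R) : R :=
  l / INR K * sum_f_R0 (fun j => INR (K - j) * Binomial.C d j * u ^ (d - j) * (1 - u) ^ j) (K - 1).

Definition p_idle (d K : nat) (l : R) : R :=
  1 - sum_f_R0 (fun j => INR (K - j) / INR K * Binomial.C d j * (1 - l) ^ j * l ^ (d - j)) (K - 1).

Definition solves_ode (d K : nat) (l : R) (f : R -> R) : Prop :=
  f 0 = l /\
  filterlim f (at_right 0) (locally l) /\
  (forall w, 0 < w -> is_derive f w (Tl d K l (f w) - f w)).

Definition EW (d K : nat) (l : R) (f : R -> R) : R :=
  / l * RInt_gen (fun w => Tl d K l (f w)) (at_point 0) (Rbar_locally p_infty).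

(* Main.v *)
Require Import Defs.
From Stdlib Require Import Reals Lra Lia Psatz Classical.
From Coquelicot Require Import Coquelicot.
Open Scope R_scope.

Definition rr (d K : nat) (v : R) : R :=
  / INR K * sum_f_R0 (fun j => INR (K - j) * Binomial.C d j * v ^ (d - j - 1) * (1 - v) ^ j) (K - 1).
Definition ss (d K : nat) (v : R) : R :=
  / INR K * sum_f_R0 (fun j => INR (K - j) * Binomial.C d j * v ^ (K - 1 - j) * (1 - v) ^ j) (K - 1).
Definition ee (d K j : nat) : R := Binomial.C (d - 1) j - INR (K - j) / INR K * Binomial.C d j.
Definition QQ (d K : nat) (v : R) : R :=
  sum_f_R0 (fun j => ee d K (S j) * (1 - v) ^ j * v ^ (d - 2 - j)) (d - 2).

Lemma pow_pred x n : (0 < n)%nat -> x ^ n = x * x ^ (n - 1).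
Proof. intros H. replace n with (S (n - 1)) at 1 by lia. reflexivity. Qed.

Lemma sum_ext_zero (f : nat -> R) (N M : nat) :
  (N <= M)%nat -> (forall j, (N < j <= M)%nat -> f j = 0) -> sum_f_R0 f M = sum_f_R0 f N.
Proof.
  intros HNM. induction M as [|M IH]; intros Hz.
  - replace N with 0%nat by lia. reflexivity.
  - destruct (Nat.eq_dec N (S M)) as [->|Hne]; [reflexivity|].
    rewrite tech5, Hz by lia. rewrite IH by (try lia; intros; apply Hz; lia). ring.
Qed.

Lemma sum_nonneg_b (f : nat -> R) N : (forall j, (j <= N)%nat -> 0 <= f j) -> 0 <= sum_f_R0 f N.
Proof.
  induction N as [|N IH]; intros H; simpl.
  - apply H; lia.
  - apply Rplus_le_le_0_compat; [apply IH; intros; apply H; lia| apply H; lia].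
Qed.

Lemma sum_ge_first (f : nat -> R) N : (forall j, (j <= N)%nat -> 0 <= f j) -> f 0%nat <= sum_f_R0 f N.
Proof.
  induction N as [|N IH]; intros H; simpl.
  - lra.
  - assert (0 <= f (S N)) by (apply H; lia).
    assert (f 0%nat <= sum_f_R0 f N) by (apply IH; intros; apply H; lia). lra.
Qed.

Lemma cont_sum (f : nat -> R -> R) N x :
  (forall j, continuous (f j) x) -> continuous (fun y => sum_f_R0 (fun j => f j y) N) x.
Proof.
  intros H. induction N as [|N IH]; simpl.
  - apply H.
  - apply (continuous_plus (fun y => sum_f_R0 (fun j => f j y) N) (fun y => f (S N) y)); auto.
Qed.

Lemma cont_term (c : R) (a b : nat) x : continuous (fun y => c * y ^ a * (1 - y) ^ b) x.
Proof. apply (@ex_derive_continuous R_AbsRing R_NormedModule). auto_derive. auto. Qed.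

Lemma cont_scal_sum (c : R) (f : nat -> R -> R) N x :
  (forall j, continuous (f j) x) -> continuous (fun y => c * sum_f_R0 (fun j => f j y) N) x.
Proof.
  intros H. apply (continuous_mult (fun _ => c) (fun y => sum_f_R0 (fun j => f j y) N)).
  apply continuous_const. apply cont_sum; auto.
Qed.

Lemma rr_cont d K x : continuous (rr d K) x.
Proof.
  unfold rr. apply (cont_scal_sum _ (fun j y => INR (K - j) * Binomial.C d j * y ^ (d - j - 1) * (1 - y) ^ j)).
  intros j. apply (cont_term (INR (K - j) * Binomial.C d j)).
Qed.

Lemma ss_cont d K x : continuous (ss d K) x.
Proof.
  unfold ss. apply (cont_scal_sum _ (fun j y => INR (K - j) * Binomial.C d j * y ^ (K - 1 - j) * (1 - y) ^ j)).
  intros j. apply (cont_term (INR (K - j) * Binomial.C d j)).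
Qed.

Lemma QQ_cont d K x : continuous (QQ d K) x.
Proof.
  unfold QQ. apply (cont_sum (fun j y => ee d K (S j) * (1 - y) ^ j * y ^ (d - 2 - j))).
  intros j. apply (@ex_derive_continuous R_AbsRing R_NormedModule). auto_derive. auto.
Qed.

Section Poly.
Variables d K : nat.
Hypothesis HK : (1 <= K)%nat.
Hypothesis HKd : (K < d)%nat.

Lemma INRK_pos : 0 < INR K.
Proof. apply lt_0_INR; lia. Qed.

Lemma Tl_rr l u : Tl d K l u = l * (u * rr d K u).
Proof.
  unfold Tl, rr.
  rewrite (sum_eq (fun j => INR (K - j) * Binomial.C d j * u ^ (d - j) * (1 - u) ^ j)
     (fun i => (INR (K - i) * Binomial.C d i * u ^ (d - i - 1) * (1 - u) ^ i) * u)).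
  - rewrite <- (scal_sum (fun i => INR (K - i) * Binomial.C d i * u ^ (d - i - 1) * (1 - u) ^ i)).
    unfold Rdiv. ring.
  - intros i Hi. rewrite (pow_pred u (d - i)) by lia. ring.
Qed.

Lemma p_idle_rr l : p_idle d K l = 1 - l * rr d K l.
Proof.
  unfold p_idle, rr.
  rewrite (sum_eq (fun j => INR (K - j) / INR K * Binomial.C d j * (1 - l) ^ j * l ^ (d - j))
     (fun i => (INR (K - i) * Binomial.C d i * l ^ (d - i - 1) * (1 - l) ^ i) * (l / INR K))).
  - rewrite <- (scal_sum (fun i => INR (K - i) * Binomial.C d i * l ^ (d - i - 1) * (1 - l) ^ i)).
    unfold Rdiv. ring.
  - intros i Hi. rewrite (pow_pred l (d - i)) by lia. unfold Rdiv. ring.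
Qed.

Lemma rr_ss v : rr d K v = v ^ (d - K) * ss d K v.
Proof.
  unfold rr, ss.
  rewrite (sum_eq (fun j => INR (K - j) * Binomial.C d j * v ^ (d - j - 1) * (1 - v) ^ j)
     (fun i => (INR (K - i) * Binomial.C d i * v ^ (K - 1 - i) * (1 - v) ^ i) * v ^ (d - K))).
  - rewrite <- (scal_sum (fun i => INR (K - i) * Binomial.C d i * v ^ (K - 1 - i) * (1 - v) ^ i)).
    ring.
  - intros i Hi. replace (d - i - 1)%nat with ((K - 1 - i) + (d - K))%nat by lia.
    rewrite pow_add. ring.
Qed.

Lemma ss0 : ss d K 0 = / INR K * Binomial.C d (K - 1).
Proof.
  unfold ss. f_equal.
  rewrite (sum_eq _ (fun j => if Nat.eq_dec j (K - 1) then Binomial.C d (K - 1) else 0)).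
  - destruct (K - 1)%nat as [|k] eqn:Ek.
    + simpl. reflexivity.
    + rewrite tech5. destruct (Nat.eq_dec (S k) (S k)); [|lia].
      rewrite (sum_eq _ (fun _ => 0)). rewrite sum_cte. ring.
      intros i Hi. destruct (Nat.eq_dec i (S k)); [lia|reflexivity].
  - intros i Hi. destruct (Nat.eq_dec i (K - 1)) as [->|Hne].
    + replace (K - (K - 1))%nat with 1%nat by lia. replace (K - 1 - (K - 1))%nat with 0%nat by lia.
      rewrite pow_O. replace (1 - 0) with 1 by ring. rewrite pow1, INR_1. ring.
    + replace (K - 1 - i)%nat with (S (K - 1 - i - 1)) by lia. rewrite <- tech_pow_Rmult. ring.
Qed.

Lemma C_nonneg n k : 0 <= Binomial.C n k.
Proof.
  unfold Binomial.C. apply Rlt_le. apply Rdiv_lt_0_compat. apply INR_fact_lt_0.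
  apply Rmult_lt_0_compat; apply INR_fact_lt_0.
Qed.

Lemma ss0_pos : 0 < ss d K 0.
Proof.
  rewrite ss0. apply Rmult_lt_0_compat. apply Rinv_0_lt_compat, INRK_pos.
  unfold Binomial.C. apply Rdiv_lt_0_compat. apply INR_fact_lt_0.
  apply Rmult_lt_0_compat; apply INR_fact_lt_0.
Qed.

Lemma rr0 : rr d K 0 = 0.
Proof.
  unfold rr. rewrite (sum_eq _ (fun _ => 0)). rewrite sum_cte. ring.
  intros i Hi. replace (d - i - 1)%nat with (S (d - i - 2)) by lia. rewrite <- tech_pow_Rmult. ring.
Qed.

Lemma rr_nonneg v : 0 <= v <= 1 -> 0 <= rr d K v.
Proof.
  intros Hv. unfold rr. apply Rmult_le_pos. apply Rlt_le, Rinv_0_lt_compat, INRK_pos.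
  apply sum_nonneg_b. intros j Hj.
  apply Rmult_le_pos; [apply Rmult_le_pos; [apply Rmult_le_pos|]|].
  apply pos_INR. apply C_nonneg. apply pow_le; lra. apply pow_le; lra.
Qed.

Lemma ss_nonneg v : 0 <= v <= 1 -> 0 <= ss d K v.
Proof.
  intros Hv. unfold ss. apply Rmult_le_pos. apply Rlt_le, Rinv_0_lt_compat, INRK_pos.
  apply sum_nonneg_b. intros j Hj.
  apply Rmult_le_pos; [apply Rmult_le_pos; [apply Rmult_le_pos|]|].
  apply pos_INR. apply C_nonneg. apply pow_le; lra. apply pow_le; lra.
Qed.

Lemma C_rel j : (j <= d - 1)%nat -> Binomial.C d j = INR d / INR (d - j) * Binomial.C (d - 1) j.
Proof.
  intros Hj. replace d with (S (d - 1)) at 1 2 3 by lia. apply pascal_step2. lia.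
Qed.

Lemma ee_nonneg j : (j <= d - 1)%nat -> 0 <= ee d K j.
Proof.
  intros Hj. unfold ee. rewrite C_rel by lia.
  assert (H0 := C_nonneg (d - 1) j).
  assert (Hdj : 0 < INR (d - j)) by (apply lt_0_INR; lia).
  assert (HKp := INRK_pos).
  destruct (Compare_dec.le_lt_dec K j) as [HjK|HjK].
  - replace (K - j)%nat with 0%nat by lia. simpl. lra.
  - rewrite !minus_INR by lia.
    rewrite minus_INR in Hdj by lia.
    assert (INR j <= INR K) by (apply le_INR; lia).
    assert (INR K <= INR d) by (apply le_INR; lia).
    assert (0 <= INR j) by apply pos_INR.
    assert (Hf : (INR K - INR j) / INR K * (INR d / (INR d - INR j)) <= 1).
    { rewrite <- Rmult_1_r. apply Rmult_le_reg_r with (INR K * (INR d - INR j)).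
      nra. field_simplify; try lra. nra. }
    nra.
Qed.

Lemma ee1 : ee d K 1 = INR (d - K) / INR K.
Proof.
  unfold ee. rewrite (pascal_step3 (d - 1) 0) by lia. rewrite (pascal_step3 d 0) by lia.
  rewrite !C_n_0. rewrite !minus_INR by lia. simpl. assert (HKp := INRK_pos). field. lra.
Qed.

Lemma ee1_pos : 0 < ee d K 1.
Proof.
  rewrite ee1. apply Rdiv_lt_0_compat. apply lt_0_INR; lia. apply INRK_pos.
Qed.

Lemma ee0 : ee d K 0 = 0.
Proof.
  unfold ee. rewrite !C_n_0. replace (K - 0)%nat with K by lia. assert (HKp := INRK_pos). field. lra.
Qed.

Lemma one_minus_rr v : 1 - rr d K v = (1 - v) * QQ d K v.
Proof.
  assert (HKp := INRK_pos).
  assert (Hb : 1 = sum_f_R0 (fun i => Binomial.C (d - 1) i * (1 - v) ^ i * v ^ (d - 1 - i)) (d - 1)).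
  { rewrite <- binomial. replace (1 - v + v) with 1 by ring. now rewrite pow1. }
  assert (Hr : rr d K v = sum_f_R0 (fun i => INR (K - i) / INR K * Binomial.C d i * (1 - v) ^ i * v ^ (d - 1 - i)) (d - 1)).
  { rewrite (sum_ext_zero _ (K - 1) (d - 1)); [| lia |].
    - unfold rr. rewrite scal_sum. apply sum_eq. intros i Hi.
      replace (d - i - 1)%nat with (d - 1 - i)%nat by lia. unfold Rdiv. ring.
    - intros j Hj. replace (K - j)%nat with 0%nat by lia. simpl. unfold Rdiv. ring. }
  rewrite Hr. pattern 1 at 1. rewrite Hb. rewrite <- minus_sum.
  rewrite decomp_sum by lia.
  replace (Binomial.C (d - 1) 0 * (1 - v) ^ 0 * v ^ (d - 1 - 0) -
     INR (K - 0) / INR K * Binomial.C d 0 * (1 - v) ^ 0 * v ^ (d - 1 - 0)) with 0.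
  2:{ rewrite !C_n_0. replace (K - 0)%nat with K by lia. field. lra. }
  unfold QQ. rewrite scal_sum. replace (Init.Nat.pred (d - 1)) with (d - 2)%nat by lia.
  rewrite Rplus_0_l. apply sum_eq. intros i Hi. unfold ee.
  replace (d - 1 - S i)%nat with (d - 2 - i)%nat by lia. rewrite <- tech_pow_Rmult. ring.
Qed.

Lemma QQ1 : QQ d K 1 = ee d K 1.
Proof.
  unfold QQ. rewrite (sum_ext_zero _ 0 (d - 2)); [| lia |].
  - simpl. rewrite pow1. ring.
  - intros j Hj. replace (1 - 1) with 0 by ring. rewrite pow_i by lia. ring.
Qed.

Lemma QQ_ge v : 0 <= v <= 1 -> ee d K 1 * v ^ (d - 2) <= QQ d K v.
Proof.
  intros Hv. unfold QQ.
  assert (H := sum_ge_first (fun j => ee d K (S j) * (1 - v) ^ j * v ^ (d - 2 - j)) (d - 2)).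
  cbv beta in H. rewrite pow_O, Nat.sub_0_r, Rmult_1_r in H. apply H.
  intros j Hj. apply Rmult_le_pos; [apply Rmult_le_pos|].
  apply ee_nonneg; lia. apply pow_le; lra. apply pow_le; lra.
Qed.

Lemma QQ0 : QQ d K 0 = 1.
Proof.
  assert (H := one_minus_rr 0). rewrite rr0 in H. lra.
Qed.

Lemma QQ_pos v : 0 <= v <= 1 -> 0 < QQ d K v.
Proof.
  intros Hv. destruct (Req_dec v 0) as [->|Hne].
  - rewrite QQ0. lra.
  - eapply Rlt_le_trans; [|apply QQ_ge; auto].
    apply Rmult_lt_0_compat. apply ee1_pos. apply pow_lt. lra.
Qed.

Lemma rr_le1 v : 0 <= v <= 1 -> rr d K v <= 1.
Proof.
  intros Hv. assert (H := one_minus_rr v). assert (H2 := QQ_pos v Hv).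
  assert (0 <= (1 - v) * QQ d K v) by (apply Rmult_le_pos; lra). lra.
Qed.

End Poly.

Section Lims.
Context {T : Type} {F : (T -> Prop) -> Prop} {FF : Filter F}.

Lemma lim_plus (f g : T -> R) a b : filterlim f F (locally a) -> filterlim g F (locally b) ->
  filterlim (fun x => f x + g x) F (locally (a + b)).
Proof.
  intros Hf Hg. eapply filterlim_comp_2; [exact Hf| exact Hg|].
  apply (@filterlim_plus R_AbsRing R_NormedModule).
Qed.

Lemma lim_mult (f g : T -> R) a b : filterlim f F (locally a) -> filterlim g F (locally b) ->
  filterlim (fun x => f x * g x) F (locally (a * b)).
Proof.
  intros Hf Hg. eapply filterlim_comp_2; [exact Hf| exact Hg|].
  apply (@filterlim_mult R_AbsRing).
Qed.

Lemma lim_cont (f : T -> R) (g : R -> R) a : filterlim f F (locally a) -> continuous g a ->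
  filterlim (fun x => g (f x)) F (locally (g a)).
Proof. intros Hf Hg. eapply filterlim_comp; [exact Hf| exact Hg]. Qed.

Lemma lim_inv (f : T -> R) a : filterlim f F (locally a) -> a <> 0 ->
  filterlim (fun x => / f x) F (locally (/ a)).
Proof. intros Hf Ha. apply (lim_cont f (fun y => / y)); auto. apply continuous_Rinv; auto. Qed.

Lemma lim_const (c : R) : filterlim (fun _ : T => c) F (locally c).
Proof. apply filterlim_const. Qed.

Lemma lim_opp (f : T -> R) a : filterlim f F (locally a) -> filterlim (fun x => - f x) F (locally (- a)).
Proof. intros Hf. apply (lim_cont f (fun y => - y)); auto. apply (continuous_opp (fun y : R => y)). apply continuous_id. Qed.

Lemma lim_ext (f g : T -> R) a : F (fun x => f x = g x) -> filterlim f F (locally a) -> filterlim g F (locally a).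
Proof. intros H Hf. eapply filterlim_ext_loc; eauto. Qed.

Lemma lim_eq (f : T -> R) a b : a = b -> filterlim f F (locally a) -> filterlim f F (locally b).
Proof. intros -> ; auto. Qed.

Lemma lim_squeeze (lo h hi : T -> R) a : F (fun x => lo x <= h x <= hi x) ->
  filterlim lo F (locally a) -> filterlim hi F (locally a) -> filterlim h F (locally a).
Proof.
  intros Hb Hlo Hhi P [eps HP].
  assert (L1 := Hlo (ball a eps) (locally_ball a eps)).
  assert (L2 := Hhi (ball a eps) (locally_ball a eps)).
  unfold filtermap in *. generalize (filter_and _ _ Hb (filter_and _ _ L1 L2)).
  apply filter_imp. intros x [[H1 H2] [H3 H4]]. apply HP.
  unfold ball in *; simpl in *. unfold AbsRing_ball, abs, minus, plus, opp in *; simpl in *.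
  apply Rabs_lt_between in H3. apply Rabs_lt_between in H4. apply Rabs_lt_between. lra.
Qed.

Lemma lim_eps (h : T -> R) a : (forall e, 0 < e -> F (fun x => Rabs (h x - a) < e)) ->
  filterlim h F (locally a).
Proof.
  intros H P [eps HP]. unfold filtermap. generalize (H eps (cond_pos eps)). apply filter_imp.
  intros x Hx. apply HP. exact Hx.
Qed.

Lemma lim_get (h : T -> R) a e : filterlim h F (locally a) -> 0 < e -> F (fun x => Rabs (h x - a) < e).
Proof.
  intros Hh He. apply (Hh (fun y => Rabs (y - a) < e)). exists (mkposreal e He). intros y Hy. exact Hy.
Qed.

End Lims.

Lemma ln_le_sub1 y : 0 < y -> ln y <= y - 1.
Proof.
  intros Hy. destruct (Req_dec y 1) as [->|Hn].
  - rewrite ln_1. lra.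
  - assert (H := exp_ineq1 (y - 1) ltac:(lra)).
    rewrite <- (ln_exp (y - 1)). left. apply ln_increasing; lra.
Qed.

Lemma mln_bounds x : 0 <= x < 1 -> x <= - ln (1 - x) <= x / (1 - x).
Proof.
  intros Hx. split.
  - assert (H := ln_le_sub1 (1 - x) ltac:(lra)). lra.
  - assert (H := ln_le_sub1 (/ (1 - x)) ltac:(apply Rinv_0_lt_compat; lra)).
    rewrite ln_Rinv in H by lra. replace (x / (1 - x)) with (/ (1 - x) - 1) by (field; lra). lra.
Qed.

Lemma at_right_ev (P : R -> Prop) a dl : 0 < dl -> (forall y, a < y < a + dl -> P y) -> at_right a P.
Proof.
  intros Hdl H. exists (mkposreal dl Hdl). intros y Hy Hay. apply H.
  unfold ball in Hy; simpl in Hy. unfold AbsRing_ball, abs, minus, plus, opp in Hy; simpl in Hy.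
  apply Rabs_lt_between in Hy. lra.
Qed.

Lemma at_left_ev (P : R -> Prop) a dl : 0 < dl -> (forall y, a - dl < y < a -> P y) -> at_left a P.
Proof.
  intros Hdl H. exists (mkposreal dl Hdl). intros y Hy Hay. apply H.
  unfold ball in Hy; simpl in Hy. unfold AbsRing_ball, abs, minus, plus, opp in Hy; simpl in Hy.
  apply Rabs_lt_between in Hy. lra.
Qed.

Lemma cont_at_right (g : R -> R) a : continuous g a -> filterlim g (at_right a) (locally (g a)).
Proof.
  intros Hg. eapply filterlim_filter_le_1; [|exact Hg]. apply filter_le_within.
Qed.

Lemma cont_at_left (g : R -> R) a : continuous g a -> filterlim g (at_left a) (locally (g a)).
Proof.
  intros Hg. eapply filterlim_filter_le_1; [|exact Hg]. apply filter_le_within.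
Qed.

Ltac Req := match goal with |- @eq _ ?a ?b => change (@eq R a b) end.

Lemma is_derive_eq (g : R -> R) x a b : is_derive g x a -> a = b -> is_derive g x b.
Proof. intros H ->. exact H. Qed.

Lemma mono_up (g dg : R -> R) a b : a <= b ->
  (forall x, a < x < b -> is_derive g x (dg x)) ->
  (forall x, a <= x <= b -> continuous g x) ->
  (forall x, a <= x <= b -> 0 <= dg x) -> g a <= g b.
Proof.
  intros Hab Hd Hc Hp.
  destruct (MVT_gen g a b dg) as [c [Hc1 Hc2]].
  - intros x Hx. rewrite Rmin_left, Rmax_right in Hx by lra. apply Hd; lra.
  - intros x Hx. rewrite Rmin_left, Rmax_right in Hx by lra. apply continuity_pt_filterlim. apply Hc; lra.
  - rewrite Rmin_left, Rmax_right in Hc1 by lra.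
    assert (0 <= dg c * (b - a)) by (apply Rmult_le_pos; [apply Hp; lra| lra]). lra.
Qed.

Lemma cont_delta (g : R -> R) x e : continuous g x -> 0 < e ->
  exists dl, 0 < dl /\ forall y, Rabs (y - x) < dl -> Rabs (g y - g x) < e.
Proof.
  intros Hc He. assert (Hl : locally (g x) (fun z => Rabs (z - g x) < e)).
  { exists (mkposreal e He). intros z Hz. exact Hz. }
  specialize (Hc _ Hl). destruct Hc as [dl Hdl].
  exists dl. split. apply cond_pos. intros y Hy. apply (Hdl y). exact Hy.
Qed.

Lemma closed_le (phi : R -> R) M : 0 < M -> continuous phi M ->
  (forall s, 0 <= s < M -> phi s <= 0) -> phi M <= 0.
Proof.
  intros HM Hc H. destruct (Rle_dec (phi M) 0) as [|Hn]; auto.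
  exfalso. destruct (cont_delta phi M (phi M) Hc) as [dl [Hdl Hy]]; [lra|].
  set (s := M - Rmin dl M / 2).
  assert (Hm1 : Rmin dl M <= dl) by apply Rmin_l. assert (Hm2 : Rmin dl M <= M) by apply Rmin_r.
  assert (Hm3 : 0 < Rmin dl M) by (apply Rmin_glb_lt; lra).
  assert (H1 := H s ltac:(unfold s; lra)).
  assert (H2 := Hy s ltac:(unfold s; rewrite Rabs_left by lra; lra)).
  apply Rabs_lt_between in H2. lra.
Qed.

Lemma exp_mul_deriv (g : R -> R) k x D : is_derive g x D ->
  is_derive (fun w => exp (k * w) * g w) x (exp (k * x) * (k * g x + D)).
Proof.
  intros Hg.
  assert (He : is_derive (fun w => exp (k * w)) x (k * exp (k * x))) by (auto_derive; [auto| ring]).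
  eapply is_derive_eq. apply (is_derive_mult (fun w => exp (k * w)) g x _ _ He Hg).
  intros; apply Rmult_comm. simpl. unfold plus, mult; simpl. ring.
Qed.

Lemma cont_exp_mul (g : R -> R) k x : continuous g x -> continuous (fun w => exp (k * w) * g w) x.
Proof.
  intros Hg. apply (continuous_mult (fun w => exp (k * w)) g); auto.
  apply (@ex_derive_continuous R_AbsRing R_NormedModule). auto_derive. auto.
Qed.

Lemma gen_lim (h I : R -> R) L :
  (forall b, 0 < b -> is_RInt h 0 b (I b)) -> filterlim I (Rbar_locally p_infty) (locally L) ->
  is_RInt_gen h (at_point 0) (Rbar_locally p_infty) L.
Proof.
  intros HI Hlim P HP. specialize (Hlim P HP). destruct Hlim as [M HM].
  apply (Filter_prod _ _ _ (fun x => x = 0) (fun b => Rmax 0 M < b)).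
  - reflexivity.
  - exists (Rmax 0 M). auto.
  - intros x y -> Hy. simpl. exists (I y). split.
    + apply HI. assert (0 <= Rmax 0 M) by apply Rmax_l. lra.
    + apply HM. assert (M <= Rmax 0 M) by apply Rmax_r. lra.
Qed.

Lemma tail_small (l q e b x : R): 0<l<1 -> 0<q -> 0<e -> 0<b -> 0 <= x -> x * (1 + (1-l)*b) <= l -> l*q < (1-l)*e*b -> x * q < e.
Proof.
  intros Hl Hq He Hb Hx H1 H2.
  assert (HA : 0 < (1 - l) * b) by nra.
  assert (H3 : x * q * ((1 - l) * b) < e * ((1 - l) * b)) by nra.
  apply Rmult_lt_reg_r in H3; auto.
Qed.
Lemma exp_tail (x l A : R) : 0 < A -> 0 <= x -> x <= l * exp (- A) -> x * (1 + A) <= l.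
Proof.
  intros HA Hx H. assert (He : 1 + A < exp A) by (apply exp_ineq1; lra).
  rewrite exp_Ropp in H. assert (Hp : 0 < exp A) by apply exp_pos.
  assert (x * exp A <= l).
  { apply Rmult_le_reg_r with (/ exp A). apply Rinv_0_lt_compat; lra.
    rewrite Rmult_assoc, Rinv_r by lra. lra. }
  nra.
Qed.

Section ODE.
Variables d K : nat.
Hypothesis HK : (1 <= K)%nat.
Hypothesis HKd : (K < d)%nat.
Variable l : R.
Hypothesis Hl : 0 < l < 1.
Variable f : R -> R.
Hypothesis Hf : solves_ode d K l f.

Definition ft (w : R) := f (Rmax w 0).

Lemma ft_eq w : 0 <= w -> ft w = f w.
Proof. intros H. unfold ft. rewrite Rmax_left; auto. Qed.

Lemma ft0 : ft 0 = l.
Proof. rewrite ft_eq by lra. apply Hf. Qed.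

Lemma ft_deriv w : 0 < w -> is_derive ft w (l * ft w * rr d K (ft w) - ft w).
Proof.
  intros Hw. destruct Hf as [_ [_ Hd]].
  apply (is_derive_ext_loc f).
  - exists (mkposreal w Hw). intros t Ht. simpl in Ht. unfold ball in Ht; simpl in Ht.
    unfold AbsRing_ball, abs, minus, plus, opp in Ht; simpl in Ht.
    apply Rabs_lt_between in Ht. rewrite ft_eq by lra. reflexivity.
  - rewrite ft_eq by lra. eapply is_derive_eq. apply Hd; auto. rewrite (Tl_rr d K HK HKd). Req. ring.
Qed.

Lemma ft_cont w : continuous ft w.
Proof.
  destruct (Rtotal_order w 0) as [Hw|[Hw|Hw]].
  - apply (continuous_ext_loc _ (fun _ => l)).
    + exists (mkposreal (- w) ltac:(lra)). intros t Ht. unfold ball in Ht; simpl in Ht.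
      unfold AbsRing_ball, abs, minus, plus, opp in Ht; simpl in Ht.
      apply Rabs_lt_between in Ht. unfold ft. rewrite Rmax_right by lra. symmetry. apply Hf.
    + apply continuous_const.
  - subst w. intros P HP. rewrite ft0 in HP.
    destruct Hf as [_ [Hlim _]].
    specialize (Hlim P HP). destruct Hlim as [dl Hdl].
    exists dl. intros y Hy. unfold ft. destruct (Rle_dec y 0) as [Hy0|Hy0].
    + rewrite Rmax_right by lra. rewrite (proj1 Hf). destruct HP as [e He]. apply He. apply ball_center.
    + rewrite Rmax_left by lra. apply Hdl; auto. lra.
  - apply (@ex_derive_continuous R_AbsRing R_NormedModule). eexists. apply ft_deriv; auto.
Qed.

Definition Bd (s : R) := l * exp (- s) <= ft s <= l * exp (- (1 - l) * s).
Definition Gd (w : R) := 0 <= w /\ forall s, 0 <= s <= w -> Bd s.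

Lemma Bd_01 s : 0 <= s -> Bd s -> 0 < ft s < 1.
Proof.
  intros Hs [H1 H2]. split.
  - eapply Rlt_le_trans; [|apply H1]. apply Rmult_lt_0_compat; [lra| apply exp_pos].
  - assert (Hq : exp (- (1 - l) * s) <= exp 0).
    { destruct (Req_dec s 0) as [->|Hn]. rewrite Rmult_0_r. lra.
      left. apply exp_increasing. nra. }
    rewrite exp_0 in Hq. nra.
Qed.

Lemma invariance : forall w, 0 <= w -> Bd w.
Proof.
  apply NNPP. intros Hn. apply not_all_ex_not in Hn. destruct Hn as [w0 Hw0].
  apply imply_to_and in Hw0. destruct Hw0 as [Hw0 Hnb].
  assert (HG0 : Gd 0).
  { split. lra. intros s Hs. replace s with 0 by lra. unfold Bd. rewrite ft0.
    rewrite Ropp_0, Rmult_0_r, exp_0. lra. }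
  assert (Hbd : bound Gd).
  { exists w0. intros x [Hx Hgx]. destruct (Rle_dec x w0); auto. exfalso. apply Hnb. apply Hgx. lra. }
  destruct (completeness Gd Hbd (ex_intro _ 0 HG0)) as [M [HMub HMl]].
  assert (HM0 : 0 <= M) by (apply HMub; auto).
  assert (C1 : forall s, 0 <= s < M -> Bd s).
  { intros s Hs. destruct (classic (exists x, Gd x /\ s < x)) as [[x [[_ Hx] Hsx]]|Hne].
    - apply Hx. lra.
    - exfalso. assert (M <= s); [|lra]. apply HMl. intros x Hx.
      destruct (Rle_dec x s); auto. exfalso. apply Hne. exists x. split; auto. lra. }
  assert (C2 : Bd M).
  { destruct (Req_dec M 0) as [->|HMn].
    - apply HG0. lra.
    - split.
      + assert (H := closed_le (fun s => l * exp (- s) - ft s) M ltac:(lra)).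
        cbv beta in H. cut (l * exp (- M) - ft M <= 0). lra. apply H.
        * apply (continuous_minus (fun s => l * exp (-s)) ft). 
          apply (@ex_derive_continuous R_AbsRing R_NormedModule). auto_derive. auto. apply ft_cont.
        * intros s Hs. destruct (C1 s Hs). lra.
      + assert (H := closed_le (fun s => ft s - l * exp (- (1 - l) * s)) M ltac:(lra)).
        cbv beta in H. cut (ft M - l * exp (- (1 - l) * M) <= 0). lra. apply H.
        * apply (continuous_minus ft (fun s => l * exp (- (1 - l) * s))). apply ft_cont.
          apply (@ex_derive_continuous R_AbsRing R_NormedModule). auto_derive. auto.
        * intros s Hs. destruct (C1 s Hs). lra. }
  assert (HM01 := Bd_01 M HM0 C2).
  destruct (cont_delta ft M (Rmin (ft M) (1 - ft M)) (ft_cont M)) as [dl [Hdl Hdd]].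
  { apply Rmin_glb_lt; lra. }
  assert (Hin : forall y, Rabs (y - M) < dl -> 0 < ft y < 1).
  { intros y Hy. specialize (Hdd y Hy). apply Rabs_lt_between in Hdd.
    assert (Rmin (ft M) (1 - ft M) <= ft M) by apply Rmin_l.
    assert (Rmin (ft M) (1 - ft M) <= 1 - ft M) by apply Rmin_r. lra. }
  assert (C3 : forall s, M < s <= M + dl / 2 -> Bd s).
  { intros s Hs. destruct C2 as [C2a C2b]. split.
    - assert (H := mono_up (fun w => exp (1 * w) * ft w)
          (fun w => exp (1 * w) * (1 * ft w + (l * ft w * rr d K (ft w) - ft w))) M s ltac:(lra)).
      cbv beta in H. 
      assert (exp (1 * M) * ft M <= exp (1 * s) * ft s).
      { apply H.
        - intros x Hx. apply exp_mul_deriv. apply ft_deriv. lra.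
        - intros x Hx. apply cont_exp_mul. apply ft_cont.
        - intros x Hx. assert (Hx01 : 0 < ft x < 1) by (apply Hin; rewrite Rabs_right; lra).
          assert (0 <= rr d K (ft x)) by (apply rr_nonneg; auto; lra).
          replace (exp (1 * x) * (1 * ft x + (l * ft x * rr d K (ft x) - ft x)))
            with (exp (1 * x) * l * ft x * rr d K (ft x)) by ring.
          apply Rmult_le_pos; [|auto]. apply Rmult_le_pos; [|lra].
          apply Rmult_le_pos; [apply Rlt_le, exp_pos| lra]. }
      rewrite !Rmult_1_l in H0.
      assert (l <= exp M * ft M).
      { replace l with (exp M * (l * exp (- M))). apply Rmult_le_compat_l. apply Rlt_le, exp_pos. auto.
        rewrite exp_Ropp. field. apply Rgt_not_eq, exp_pos. }
      replace (ft s) with (exp (- s) * (exp s * ft s)).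
      rewrite (Rmult_comm l). apply Rmult_le_compat_l. apply Rlt_le, exp_pos. lra.
      rewrite exp_Ropp. field. apply Rgt_not_eq, exp_pos.
    - assert (H := mono_up (fun w => - (exp ((1 - l) * w) * ft w))
          (fun w => - (exp ((1 - l) * w) * ((1 - l) * ft w + (l * ft w * rr d K (ft w) - ft w)))) M s ltac:(lra)).
      cbv beta in H.
      assert (exp ((1 - l) * s) * ft s <= exp ((1 - l) * M) * ft M).
      { cut (- (exp ((1 - l) * M) * ft M) <= - (exp ((1 - l) * s) * ft s)). lra. apply H.
        - intros x Hx. apply (is_derive_opp (fun w => exp ((1 - l) * w) * ft w)).
          apply exp_mul_deriv. apply ft_deriv. lra.
        - intros x Hx. apply (continuous_opp (fun w => exp ((1 - l) * w) * ft w)). apply cont_exp_mul. apply ft_cont.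
        - intros x Hx. assert (Hx01 : 0 < ft x < 1) by (apply Hin; rewrite Rabs_right; lra).
          assert (rr d K (ft x) <= 1) by (apply rr_le1; auto; lra).
          replace (- (exp ((1 - l) * x) * ((1 - l) * ft x + (l * ft x * rr d K (ft x) - ft x))))
            with (exp ((1 - l) * x) * l * ft x * (1 - rr d K (ft x))) by ring.
          apply Rmult_le_pos; [|lra]. apply Rmult_le_pos; [|lra].
          apply Rmult_le_pos; [apply Rlt_le, exp_pos| lra]. }
      assert (exp ((1 - l) * M) * ft M <= l).
      { eapply Rle_trans. apply Rmult_le_compat_l. apply Rlt_le, exp_pos. exact C2b. right.
        replace (- (1 - l) * M) with (- ((1 - l) * M)) by ring.
        rewrite exp_Ropp. field. apply Rgt_not_eq, exp_pos. }
      replace (ft s) with (exp (- (1 - l) * s) * (exp ((1 - l) * s) * ft s)).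
      rewrite (Rmult_comm l). apply Rmult_le_compat_l. apply Rlt_le, exp_pos. lra.
      replace (- (1 - l) * s) with (- ((1 - l) * s)) by ring.
      rewrite exp_Ropp. field. apply Rgt_not_eq, exp_pos. }
  assert (HG : Gd (M + dl / 2)).
  { split. lra. intros s Hs. destruct (Rtotal_order s M) as [H|[H|H]].
    - apply C1; lra.
    - subst; auto.
    - apply C3; lra. }
  assert (M + dl / 2 <= M) by (apply HMub; auto). lra.
Qed.

Lemma ft_range w : 0 <= w -> 0 < ft w < 1.
Proof. intros Hw. apply Bd_01; auto. apply invariance; auto. Qed.


Lemma den_pos v : 0 <= v <= 1 -> 1 - l <= 1 - l * rr d K v.
Proof.
  intros Hv. assert (rr d K v <= 1) by (apply rr_le1; auto). assert (0 <= rr d K v) by (apply rr_nonneg; auto).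
  nra.
Qed.

Lemma rat_cont (a : R) v : 0 <= v <= 1 -> continuous (fun v => a * rr d K v / (1 - l * rr d K v)) v.
Proof.
  intros Hv. unfold Rdiv.
  apply (continuous_mult (fun v => a * rr d K v) (fun v => / (1 - l * rr d K v))).
  - apply (continuous_mult (fun _ => a) (rr d K)). apply continuous_const. apply rr_cont.
  - apply (continuous_Rinv_comp (fun v => 1 - l * rr d K v)).
    + apply (continuous_minus (fun _ => 1) (fun v => l * rr d K v)). apply continuous_const.
      apply (continuous_mult (fun _ => l) (rr d K)). apply continuous_const. apply rr_cont.
    + assert (H := den_pos v Hv). lra.
Qed.

Definition phi (v : R) := l * rr d K v / (1 - l * rr d K v).

Lemma phi_bound v : 0 <= v <= 1 -> 0 <= phi v <= l / (1 - l).
Proof.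
  intros Hv. assert (H1 := den_pos v Hv). assert (rr d K v <= 1) by (apply rr_le1; auto).
  assert (0 <= rr d K v) by (apply rr_nonneg; auto). unfold phi, Rdiv. split.
  - apply Rmult_le_pos. nra. apply Rlt_le, Rinv_0_lt_compat. lra.
  - apply Rmult_le_compat. nra. apply Rlt_le, Rinv_0_lt_compat. lra. nra.
    apply Rinv_le_contravar; lra.
Qed.

Definition GG (u : R) := RInt phi 0 u.

Lemma phi_ex u : 0 <= u <= 1 -> ex_RInt phi 0 u.
Proof.
  intros Hu. apply (@ex_RInt_continuous R_CompleteNormedModule). intros z Hz. rewrite Rmin_left, Rmax_right in Hz by lra.
  apply rat_cont. lra.
Qed.

Lemma GG_deriv u : 0 < u < 1 -> is_derive GG u (phi u).
Proof.
  intros Hu. apply (is_derive_RInt phi GG 0 u).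
  - exists (mkposreal (Rmin u (1 - u)) ltac:(apply Rmin_glb_lt; lra)). intros b Hb.
    unfold ball in Hb; simpl in Hb. unfold AbsRing_ball, abs, minus, plus, opp in Hb; simpl in Hb.
    apply Rabs_lt_between in Hb.
    assert (Rmin u (1 - u) <= u) by apply Rmin_l. assert (Rmin u (1 - u) <= 1 - u) by apply Rmin_r.
    apply (@RInt_correct R_CompleteNormedModule). apply phi_ex. lra.
  - apply rat_cont. lra.
Qed.

Lemma GG_cont u : 0 < u < 1 -> continuous GG u.
Proof. intros Hu. apply (@ex_derive_continuous R_AbsRing R_NormedModule). eexists. apply GG_deriv; auto. Qed.

Lemma GG_bound u : 0 <= u <= 1 -> Rabs (GG u) <= u * (l / (1 - l)).
Proof.
  intros Hu. unfold GG. replace u with (u - 0) at 2 by ring. apply abs_RInt_le_const. lra.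
  apply phi_ex; auto. intros t Ht. assert (H := phi_bound t ltac:(lra)). rewrite Rabs_pos_eq; lra.
Qed.

Definition hfun (w : R) := l * ft w * rr d K (ft w).

Lemma hfun_cont w : continuous hfun w.
Proof.
  apply (continuous_mult (fun w => l * ft w) (fun w => rr d K (ft w))).
  - apply (continuous_mult (fun _ => l) ft). apply continuous_const. apply ft_cont.
  - apply (continuous_comp ft (rr d K)). apply ft_cont. apply rr_cont.
Qed.

Lemma hfun_ex a b : ex_RInt hfun a b.
Proof. apply (@ex_RInt_continuous R_CompleteNormedModule). intros; apply hfun_cont. Qed.

Definition Ih (W : R) := RInt hfun 0 W.

Lemma Ih_deriv W : is_derive Ih W (hfun W).
Proof.
  apply (is_derive_RInt hfun Ih 0 W). exists (mkposreal 1 Rlt_0_1). intros b _. apply (@RInt_correct R_CompleteNormedModule), hfun_ex.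
  apply hfun_cont.
Qed.

Definition HH (W : R) := Ih W + GG (ft W).

Lemma HH_deriv W : 0 < W -> is_derive HH W 0.
Proof.
  intros HW. assert (Hr := ft_range W ltac:(lra)).
  assert (H1 := is_derive_comp GG ft W _ _ (GG_deriv (ft W) Hr) (ft_deriv W HW)).
  assert (H2 := is_derive_plus Ih (fun w => GG (ft w)) W _ _ (Ih_deriv W) H1).
  eapply is_derive_eq. exact H2. Req.
  unfold plus, scal; simpl. unfold mult; simpl. unfold hfun, phi.
  assert (H3 := den_pos (ft W) ltac:(lra)). field. lra.
Qed.

Lemma HH_cont W : 0 <= W -> continuous HH W.
Proof.
  intros HW. apply (continuous_plus Ih (fun w => GG (ft w))).
  - apply (@ex_derive_continuous R_AbsRing R_NormedModule). eexists. apply Ih_deriv.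
  - apply (continuous_comp ft GG). apply ft_cont. apply GG_cont. apply ft_range; auto.
Qed.

Lemma HH_const W : 0 <= W -> HH W = GG l.
Proof.
  intros HW.
  assert (E0 : HH 0 = GG l).
  { unfold HH, Ih. rewrite RInt_point, ft0. simpl. unfold zero; simpl. ring. }
  rewrite <- E0.
  assert (A : HH 0 <= HH W).
  { apply (mono_up HH (fun _ => 0)). lra.
    - intros x Hx. apply HH_deriv. lra.
    - intros x Hx. apply HH_cont. lra.
    - intros; lra. }
  assert (B : - HH 0 <= - HH W).
  { apply (mono_up (fun w => - HH w) (fun _ => - 0)). lra.
    - intros x Hx. apply (is_derive_opp HH). apply HH_deriv. lra.
    - intros x Hx. apply (continuous_opp HH). apply HH_cont. lra.
    - intros; lra. }
  lra.
Qed.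

Definition Eint (l : R) := RInt (fun v => rr d K v / (1 - l * rr d K v)) 0 l.

Lemma EW_Eint : EW d K l f = Eint l.
Proof.
  unfold EW.
  assert (HI : is_RInt_gen (fun w => Tl d K l (f w)) (at_point 0) (Rbar_locally p_infty) (GG l)).
  { apply (gen_lim _ (fun b => GG l - GG (ft b))).
    - intros b Hb. apply (is_RInt_ext hfun).
      + intros x Hx. rewrite Rmin_left, Rmax_right in Hx by lra. unfold hfun.
        rewrite (Tl_rr d K HK HKd), ft_eq by lra. Req. ring.
      + replace (GG l - GG (ft b)) with (Ih b).
        apply (@RInt_correct R_CompleteNormedModule), hfun_ex. assert (H := HH_const b ltac:(lra)). unfold HH in H. lra.
    - intros P [eps HP].
      set (q := l / (1 - l)).
      assert (Hq : 0 < q) by (unfold q; apply Rdiv_lt_0_compat; lra).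
      destruct eps as [e He].
      exists (Rmax 0 (l * q / ((1 - l) * e))). intros b Hb. apply HP.
      assert (Hb0 : 0 < b) by (assert (H := Rmax_l 0 (l * q / ((1 - l) * e))); lra).
      assert (Hb1 : l * q / ((1 - l) * e) < b) by (assert (H := Rmax_r 0 (l * q / ((1 - l) * e))); lra).
      unfold ball; simpl. unfold AbsRing_ball, abs, minus, plus, opp; simpl.
      replace (GG l - GG (ft b) + - GG l) with (- GG (ft b)) by ring. rewrite Rabs_Ropp.
      assert (Hr := ft_range b ltac:(lra)).
      assert (Hg := GG_bound (ft b) ltac:(lra)).
      assert (Hinv := invariance b ltac:(lra)). destruct Hinv as [_ Hup].
      replace (- (1 - l) * b) with (- ((1 - l) * b)) in Hup by ring.
      assert (Hft := exp_tail (ft b) l ((1 - l) * b) ltac:(nra) ltac:(lra) Hup).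
      assert (Hb2 : l * q < (1 - l) * e * b).
      { apply Rmult_lt_reg_r with (/ ((1 - l) * e)). apply Rinv_0_lt_compat. nra.
        replace ((1 - l) * e * b * / ((1 - l) * e)) with b. exact Hb1. field. split; lra. }
      apply Rle_lt_trans with (ft b * q). exact Hg.
      (apply (tail_small l q e b (ft b)); auto; lra). }
  rewrite (@is_RInt_gen_unique R_CompleteNormedModule _ _ (Proper_StrongProper _ (at_point_filter (0:R_UniformSpace))) (Proper_StrongProper _ (Rbar_locally_filter p_infty)) _ _ HI).
  assert (HE : is_RInt phi 0 l (l * Eint l)).
  { apply (is_RInt_ext (fun v => scal l (rr d K v / (1 - l * rr d K v)))).
    - intros x _. unfold scal; simpl. unfold mult; simpl. unfold phi, Rdiv. ring.
    - apply (@is_RInt_scal R_NormedModule). apply (@RInt_correct R_CompleteNormedModule). apply (@ex_RInt_continuous R_CompleteNormedModule). intros z Hz.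
      rewrite Rmin_left, Rmax_right in Hz by lra.
      apply (continuous_ext (fun v => 1 * rr d K v / (1 - l * rr d K v))).
      intros; unfold Rdiv; Req; ring. apply rat_cont. lra. }
  unfold GG. rewrite (@is_RInt_unique R_CompleteNormedModule _ _ _ _ HE). field. lra.
Qed.

End ODE.

Ltac Req2 := match goal with |- @eq _ ?a ?b => change (@eq R a b) end.

Lemma RInt_pow m l : is_RInt (fun v => v ^ m) 0 l (l ^ S m / INR (S m)).
Proof.
  assert (Hn : 0 < INR (S m)) by (apply lt_0_INR; lia).
  assert (H := @is_RInt_derive R_CompleteNormedModule (fun v => v ^ S m / INR (S m)) (fun v => v ^ m) 0 l).
  replace (l ^ S m / INR (S m)) with (minus (l ^ S m / INR (S m)) (0 ^ S m / INR (S m))).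
  apply H.
  - intros x _. auto_derive. auto. change (match m with 0%nat => 1 | S _ => INR m + 1 end) with (INR (S m)). field. lra.
  - intros x _. apply (@ex_derive_continuous R_AbsRing R_NormedModule). auto_derive. auto.
  - unfold minus, plus, opp; simpl. unfold Rdiv. rewrite !Rmult_0_l. ring.
Qed.

Section Zero.
Variables d K : nat.
Hypothesis HK : (1 <= K)%nat.
Hypothesis HKd : (K < d)%nat.

Let m := (d - K)%nat.
Let c := ss d K 0.

Lemma rr_ex a b : ex_RInt (rr d K) a b.
Proof. apply (@ex_RInt_continuous R_CompleteNormedModule). intros; apply rr_cont. Qed.

Lemma Rb_bounds l a b : 0 <= l -> (forall v, 0 <= v <= l -> a <= ss d K v <= b) ->
  a * (l ^ S m / INR (S m)) <= RInt (rr d K) 0 l <= b * (l ^ S m / INR (S m)).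
Proof.
  intros Hl Hb.
  assert (Ia := @is_RInt_scal R_NormedModule _ _ _ a _ (RInt_pow m l)).
  assert (Ib := @is_RInt_scal R_NormedModule _ _ _ b _ (RInt_pow m l)).
  split.
  - assert (Ea : RInt (fun y => a * y ^ m) 0 l = a * (l ^ S m / INR (S m))) by (apply (@is_RInt_unique R_CompleteNormedModule); exact Ia).
    rewrite <- Ea.
    apply RInt_le; auto. eexists; exact Ia. apply rr_ex.
    intros x Hx. rewrite (rr_ss d K HK HKd).
    fold m. assert (0 <= x ^ m) by (apply pow_le; lra). destruct (Hb x ltac:(lra)). nra.
  - assert (Eb : RInt (fun y => b * y ^ m) 0 l = b * (l ^ S m / INR (S m))) by (apply (@is_RInt_unique R_CompleteNormedModule); exact Ib).
    rewrite <- Eb.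
    apply RInt_le; auto. apply rr_ex. eexists; exact Ib.
    intros x Hx. rewrite (rr_ss d K HK HKd).
    fold m. assert (0 <= x ^ m) by (apply pow_le; lra). destruct (Hb x ltac:(lra)). nra.
Qed.

Lemma Z_lim : filterlim (fun l => RInt (rr d K) 0 l / l ^ S m) (at_right 0) (locally (c / INR (S m))).
Proof.
  apply lim_eps. intros e He.
  assert (Hn : 1 <= INR (S m)) by (rewrite S_INR; assert (H := pos_INR m); lra).
  destruct (cont_delta (ss d K) 0 (e / 2) (ss_cont d K 0) ltac:(lra)) as [dl [Hdl Hd]].
  apply (at_right_ev _ 0 dl Hdl). intros l Hl.
  assert (Hb := Rb_bounds l (c - e / 2) (c + e / 2) ltac:(lra)).
  destruct Hb as [Hb1 Hb2].
  { intros v Hv. assert (H := Hd v ltac:(rewrite Rminus_0_r, Rabs_pos_eq; lra)).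
    apply Rabs_lt_between in H. fold c in H. lra. }
  assert (Hp : 0 < l ^ S m) by (apply pow_lt; lra).
  set (R0 := RInt (rr d K) 0 l) in *.
  assert (Hinv : 0 <= / l ^ S m) by (apply Rlt_le, Rinv_0_lt_compat; auto).
  assert (E1 : (c - e / 2) / INR (S m) <= R0 / l ^ S m).
  { replace ((c - e / 2) / INR (S m)) with (((c - e / 2) * (l ^ S m / INR (S m))) * / l ^ S m) by (field; lra).
    unfold Rdiv at 2. apply Rmult_le_compat_r; auto. }
  assert (E2 : R0 / l ^ S m <= (c + e / 2) / INR (S m)).
  { replace ((c + e / 2) / INR (S m)) with (((c + e / 2) * (l ^ S m / INR (S m))) * / l ^ S m) by (field; lra).
    unfold Rdiv at 1. apply Rmult_le_compat_r; auto. }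
  assert (E3 : (e / 2) / INR (S m) <= e / 2).
  { unfold Rdiv. rewrite <- (Rmult_1_r (e * / 2)) at 2. apply Rmult_le_compat_l. lra.
    rewrite <- Rinv_1. apply Rinv_le_contravar; lra. }
  apply Rabs_lt_between. unfold Rdiv in *. split; nra.
Qed.

Lemma rho_lim : filterlim (fun l => RInt (rr d K) 0 l / (l * rr d K l)) (at_right 0) (locally (1 / INR (S m))).
Proof.
  assert (Hc : 0 < c) by (apply ss0_pos; auto).
  assert (Hn : 0 < INR (S m)) by (apply lt_0_INR; lia).
  apply (lim_ext (fun l => (RInt (rr d K) 0 l / l ^ S m) * / ss d K l)).
  - apply (at_right_ev _ 0 1 Rlt_0_1). intros l Hl. rewrite (rr_ss d K HK HKd). fold m.
    unfold Rdiv. rewrite !Rinv_mult. simpl. rewrite Rinv_mult. ring.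
  - apply (lim_eq _ ((c / INR (S m)) * / c)). Req2. field. split; lra.
    apply lim_mult. apply Z_lim. apply lim_inv. apply cont_at_right. apply ss_cont. lra.
Qed.

Lemma Eint_bounds l : 0 < l < 1 ->
  RInt (rr d K) 0 l <= Eint d K l <= RInt (rr d K) 0 l / (1 - l).
Proof.
  intros Hl.
  assert (Hex : ex_RInt (fun v => rr d K v / (1 - l * rr d K v)) 0 l).
  { apply (@ex_RInt_continuous R_CompleteNormedModule). intros z Hz. rewrite Rmin_left, Rmax_right in Hz by lra.
    apply (continuous_ext (fun v => 1 * rr d K v / (1 - l * rr d K v))).
    intros; unfold Rdiv; Req2; ring. apply (rat_cont d K HK HKd l Hl). lra. }
  unfold Eint. split.
  - apply RInt_le. lra. apply rr_ex. auto. intros x Hx.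
    assert (H1 := rr_le1 d K HK HKd x ltac:(lra)). assert (H2 := rr_nonneg d K HK HKd x ltac:(lra)).
    assert (H3 : 0 < 1 - l * rr d K x) by nra.
    unfold Rdiv. rewrite <- (Rmult_1_r (rr d K x)) at 1. apply Rmult_le_compat_l. auto.
    rewrite <- Rinv_1. apply Rinv_le_contravar; nra.
  - unfold Rdiv at 2. rewrite Rmult_comm.
    rewrite <- (RInt_scal (V := R_CompleteNormedModule)) by apply rr_ex.
    apply RInt_le. lra. auto.
    apply (@ex_RInt_continuous R_CompleteNormedModule). intros z _.
    apply (continuous_scal_r (V := R_NormedModule)). apply rr_cont.
    intros x Hx. unfold scal; simpl; unfold mult; simpl.
    assert (H1 := rr_le1 d K HK HKd x ltac:(lra)). assert (H2 := rr_nonneg d K HK HKd x ltac:(lra)).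
    assert (H3 : 1 - l <= 1 - l * rr d K x) by nra.
    unfold Rdiv. rewrite (Rmult_comm (rr d K x)). apply Rmult_le_compat_r. auto.
    apply Rinv_le_contravar; lra.
Qed.

Lemma limit_zero : filterlim (fun l => Eint d K l / (- ln (1 - l * rr d K l))) (at_right 0)
  (locally (1 / INR (S m))).
Proof.
  set (rho := fun l => RInt (rr d K) 0 l / (l * rr d K l)).
  assert (Hc : 0 < c) by (apply ss0_pos; auto).
  assert (Hx : filterlim (fun l => l * rr d K l) (at_right 0) (locally 0)).
  { apply (lim_eq _ (0 * rr d K 0)). Req2. ring. apply (cont_at_right (fun l => l * rr d K l) 0).
    apply (continuous_mult (fun l => l) (rr d K)). apply continuous_id. apply rr_cont. }
  assert (Hid : filterlim (fun l : R => l) (at_right 0) (locally 0)).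
  { apply (cont_at_right (fun l => l)). apply continuous_id. }
  apply (lim_squeeze (fun l => rho l * (1 - l * rr d K l)) _ (fun l => rho l * / (1 - l))).
  - destruct (cont_delta (ss d K) 0 (c / 2) (ss_cont d K 0) ltac:(lra)) as [dl [Hdl Hd]].
    apply (at_right_ev _ 0 (Rmin dl (1/2)) ltac:(apply Rmin_glb_lt; lra)). intros l Hl.
    assert (Hm1 := Rmin_l dl (1/2)). assert (Hm2 := Rmin_r dl (1/2)).
    assert (Hs : c / 2 < ss d K l).
    { assert (H := Hd l ltac:(rewrite Rminus_0_r, Rabs_pos_eq; lra)). apply Rabs_lt_between in H. fold c in H. lra. }
    assert (Hxp : 0 < l * rr d K l).
    { rewrite (rr_ss d K HK HKd). apply Rmult_lt_0_compat. lra. apply Rmult_lt_0_compat. apply pow_lt. lra. lra. }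
    assert (Hr1 := rr_le1 d K HK HKd l ltac:(lra)).
    set (x := l * rr d K l) in *.
    assert (Hx1 : x <= l) by (unfold x; nra).
    assert (HP := mln_bounds x ltac:(lra)).
    set (P := - ln (1 - x)) in *.
    assert (HEb := Eint_bounds l ltac:(lra)).
    set (R0 := RInt (rr d K) 0 l) in *. set (E := Eint d K l) in *.
    assert (HR0 : 0 <= R0).
    { apply RInt_ge_0. lra. apply rr_ex. intros v Hv. apply rr_nonneg; auto; lra. }
    unfold rho. fold x. fold R0. fold E.
    assert (HPp : 0 < P) by lra.
    assert (Hi1 : / (x / (1 - x)) <= / P) by (apply Rinv_le_contravar; lra).
    assert (Hi2 : / P <= / x) by (apply Rinv_le_contravar; lra).
    replace (/ (x / (1 - x))) with ((1 - x) / x) in Hi1 by (field; lra).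
    assert (0 <= / P) by (apply Rlt_le, Rinv_0_lt_compat; lra).
    split.
    + replace (R0 / x * (1 - x)) with (R0 * ((1 - x) / x)) by (field; lra).
      unfold Rdiv at 2. apply Rmult_le_compat; try lra.
      apply Rlt_le. apply Rdiv_lt_0_compat; lra.
    + replace (R0 / x * / (1 - l)) with ((R0 / (1 - l)) * / x) by (field; lra).
      unfold Rdiv at 1. apply Rmult_le_compat; try lra.
  - apply (lim_eq _ (1 / INR (S m) * (1 - 0))). Req2. ring.
    apply lim_mult. apply rho_lim. apply (lim_plus (fun _ => 1) (fun l => - (l * rr d K l)) 1 (- 0)).
    apply lim_const. apply lim_opp. auto.
  - apply (lim_eq _ (1 / INR (S m) * / (1 - 0))). Req2. field. apply not_0_INR; lia.
    apply lim_mult. apply rho_lim. apply lim_inv. apply (lim_plus (fun _ => 1) (fun l => - l) 1 (- 0)).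
    apply lim_const. apply lim_opp. auto. lra.
Qed.

End Zero.

Ltac Req3 := match goal with |- @eq _ ?a ?b => change (@eq R a b) end.

Lemma iL_lim : filterlim (fun l => / (- ln (1 - l))) (at_left 1) (locally 0).
Proof.
  apply lim_eps. intros e He.
  assert (Hq : 0 < exp (- (/ e))) by apply exp_pos.
  apply (at_left_ev _ 1 (Rmin (exp (- / e)) 1) ltac:(apply Rmin_glb_lt; lra)).
  intros l Hl. assert (H1 := Rmin_l (exp (- / e)) 1). assert (H2 := Rmin_r (exp (- / e)) 1).
  assert (Hln : ln (1 - l) < - / e).
  { rewrite <- (ln_exp (- / e)). apply ln_increasing; lra. }
  assert (Hie : 0 < / e) by (apply Rinv_0_lt_compat; lra).
  rewrite Rminus_0_r. rewrite Rabs_pos_eq.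
  - assert (Hx : / (- ln (1 - l)) < / / e) by (apply Rinv_lt_contravar; nra).
    rewrite Rinv_inv in Hx. exact Hx.
  - apply Rlt_le, Rinv_0_lt_compat. lra.
Qed.

Lemma iL_pos l : 0 < l < 1 -> 0 < / (- ln (1 - l)).
Proof.
  intros Hl. apply Rinv_0_lt_compat. assert (H : ln (1 - l) < ln 1) by (apply ln_increasing; lra). rewrite ln_1 in H. lra.
Qed.

Definition JJ (b e l : R) := (ln ((1 - l) + l * b * (1 - e)) - ln ((1 - l) * (1 + l * b))) / (l * b).

Lemma JJ_RInt b e l : 0 < b -> 0 < e < l -> l < 1 ->
  is_RInt (fun v => / ((1 - l) + l * b * (1 - v))) e l (JJ b e l).
Proof.
  intros Hb He Hl.
  assert (H := @is_RInt_derive R_CompleteNormedModule (fun v => - ln ((1 - l) + l * b * (1 - v)) / (l * b))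
     (fun v => / ((1 - l) + l * b * (1 - v))) e l).
  replace (JJ b e l) with (minus (- ln ((1 - l) + l * b * (1 - l)) / (l * b)) (- ln ((1 - l) + l * b * (1 - e)) / (l * b))).
  apply H.
  - intros x Hx. rewrite Rmin_left, Rmax_right in Hx by lra.
    assert (0 < l * b * (1 - x)) by (apply Rmult_lt_0_compat; [apply Rmult_lt_0_compat|]; lra).
    assert (0 < 1 - l + l * b * (1 - x)) by lra.
    auto_derive. lra. field. lra.
  - intros x Hx. rewrite Rmin_left, Rmax_right in Hx by lra.
    assert (0 < l * b * (1 - x)) by (apply Rmult_lt_0_compat; [apply Rmult_lt_0_compat|]; lra).
    assert (0 < 1 - l + l * b * (1 - x)) by lra.
    apply (@ex_derive_continuous R_AbsRing R_NormedModule). auto_derive. lra.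
  - unfold minus, plus, opp; simpl. unfold JJ.
    replace (1 - l + l * b * (1 - l)) with ((1 - l) * (1 + l * b)) by ring. field. nra.
Qed.

Lemma JJ_lim b e : 0 < b -> 0 < e < 1 ->
  filterlim (fun l => JJ b e l * / (- ln (1 - l))) (at_left 1) (locally (1 / b)).
Proof.
  intros Hb He.
  assert (Hev : at_left 1 (fun l => / (l * b) * (ln ((1 - l) + l * b * (1 - e)) * / (- ln (1 - l))
       - ln (1 + l * b) * / (- ln (1 - l)) + 1) = JJ b e l * / (- ln (1 - l)))).
  { apply (at_left_ev _ 1 1 Rlt_0_1). intros l Hl.
    assert (HiL := iL_pos l ltac:(lra)).
    assert (HL : ln (1 - l) <> 0) by (intro H; rewrite H, Ropp_0, Rinv_0 in HiL; lra).
    unfold JJ. rewrite ln_mult by nra. field. split; [auto| split; lra]. }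
  apply (lim_ext _ _ _ Hev).
  apply (lim_eq _ (/ (1 * b) * (ln (1 - 1 + 1 * b * (1 - e)) * 0 - ln (1 + 1 * b) * 0 + 1))).
    Req3. field. lra.
    apply lim_mult.
    + apply lim_inv. apply (cont_at_left (fun l => l * b) 1).
      apply (@ex_derive_continuous R_AbsRing R_NormedModule). auto_derive. auto. nra.
    + apply (lim_plus _ (fun _ => 1)); [|apply lim_const].
      apply (lim_plus _ (fun l => - (ln (1 + l * b) * / (- ln (1 - l))))).
      * apply lim_mult; [|apply iL_lim].
        apply (cont_at_left (fun l => ln (1 - l + l * b * (1 - e))) 1).
        apply (@ex_derive_continuous R_AbsRing R_NormedModule). auto_derive. nra.
      * apply lim_opp. apply lim_mult; [|apply iL_lim].
        apply (cont_at_left (fun l => ln (1 + l * b)) 1).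
        apply (@ex_derive_continuous R_AbsRing R_NormedModule). auto_derive. nra.
Qed.

Lemma eps_choice k t : 0 < k -> 0 < t ->
  let e := Rmin (k / 2) (t * k * k / 8) in
  0 < e /\ e <= k / 2 /\ 1 / k - t / 8 <= 1 / (k + e) /\ 1 / (k - e) <= 1 / k + t / 4.
Proof.
  intros Hk Ht e.
  assert (H1 := Rmin_l (k / 2) (t * k * k / 8)). assert (H2 := Rmin_r (k / 2) (t * k * k / 8)).
  assert (Htk : 0 < t * k * k) by (apply Rmult_lt_0_compat; [apply Rmult_lt_0_compat|]; lra).
  assert (H0 : 0 < e) by (unfold e; apply Rmin_glb_lt; lra). fold e in H1, H2.
  split; [auto|]. split; [auto|]. split.
  - assert (E : 1 / k - 1 / (k + e) = e / (k * (k + e))) by (field; lra).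
    assert (e / (k * (k + e)) <= e / (k * k)).
    { unfold Rdiv. apply Rmult_le_compat_l. lra. apply Rinv_le_contravar; nra. }
    assert (e / (k * k) <= t / 8).
    { apply Rmult_le_reg_r with (k * k). nra. unfold Rdiv. rewrite Rmult_assoc, Rinv_l by nra. nra. }
    lra.
  - assert (E : 1 / (k - e) - 1 / k = e / (k * (k - e))) by (field; lra).
    assert (e / (k * (k - e)) <= e / (k * (k / 2))).
    { unfold Rdiv. apply Rmult_le_compat_l. lra. apply Rinv_le_contravar; nra. }
    assert (e / (k * (k / 2)) <= t / 4).
    { apply Rmult_le_reg_r with (k * (k / 2)). nra. unfold Rdiv. rewrite Rmult_assoc, Rinv_l by nra. nra. }
    lra.
Qed.

Ltac Req4 := match goal with |- @eq _ ?a ?b => change (@eq R a b) end.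

Section One.
Variables d K : nat.
Hypothesis HK : (1 <= K)%nat.
Hypothesis HKd : (K < d)%nat.

Definition Phi (l : R) := RInt (fun v => / (1 - l * rr d K v)) 0 l.

Lemma den_eq l v : 1 - l * rr d K v = (1 - l) + l * ((1 - v) * QQ d K v).
Proof. rewrite <- (one_minus_rr d K HK HKd). ring. Qed.

Lemma den_pos1 l v : 0 < l < 1 -> 0 <= v <= 1 -> 1 - l <= 1 - l * rr d K v.
Proof.
  intros Hl Hv. assert (H1 := rr_le1 d K HK HKd v Hv). assert (H2 := rr_nonneg d K HK HKd v Hv). nra.
Qed.

Lemma g_cont l v : 0 < l < 1 -> 0 <= v <= 1 -> continuous (fun v => / (1 - l * rr d K v)) v.
Proof.
  intros Hl Hv. apply (continuous_Rinv_comp (fun v => 1 - l * rr d K v)).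
  - apply (continuous_minus (fun _ => 1) (fun v => l * rr d K v)). apply continuous_const.
    apply (continuous_mult (fun _ => l) (rr d K)). apply continuous_const. apply rr_cont.
  - assert (H := den_pos1 l v Hl Hv). lra.
Qed.

Lemma g_ex l a b : 0 < l < 1 -> 0 <= a <= 1 -> 0 <= b <= 1 -> ex_RInt (fun v => / (1 - l * rr d K v)) a b.
Proof.
  intros Hl Ha Hb. apply (@ex_RInt_continuous R_CompleteNormedModule). intros z Hz.
  apply g_cont; auto. split.
  - apply Rle_trans with (Rmin a b); [apply Rmin_glb; lra| lra].
  - apply Rle_trans with (Rmax a b); [lra| apply Rmax_lub; lra].
Qed.

Lemma q0_exists : exists q0, 0 < q0 /\ forall v, 0 <= v <= 1 -> q0 <= QQ d K v.
Proof.
  destruct (continuity_ab_min (QQ d K) 0 1 ltac:(lra)) as [mx [H1 H2]].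
  - intros c _. apply continuity_pt_filterlim. apply QQ_cont.
  - exists (QQ d K mx). split; auto. apply QQ_pos; auto.
Qed.

Lemma PhiL_lim : filterlim (fun l => Phi l * / (- ln (1 - l))) (at_left 1) (locally (1 / ee d K 1)).
Proof.
  apply lim_eps. intros t Ht.
  destruct q0_exists as [q0 [Hq0 Hq]].
  set (k := ee d K 1).
  assert (Hk : 0 < k) by (apply ee1_pos; auto).
  destruct (eps_choice k t Hk Ht) as [He [He2 [Hlo Hhi]]].
  set (e := Rmin (k / 2) (t * k * k / 8)) in *.
  destruct (cont_delta (QQ d K) 1 e (QQ_cont d K 1) He) as [dl [Hdl Hd]].
  rewrite (QQ1 d K HK HKd) in Hd. fold k in Hd.
  set (d1 := Rmin dl (1 / 2) / 2).
  assert (Hd1 : 0 < d1 /\ d1 < dl /\ d1 <= 1 / 4).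
  { assert (H1 := Rmin_l dl (1 / 2)). assert (H2 := Rmin_r dl (1 / 2)).
    assert (0 < Rmin dl (1 / 2)) by (apply Rmin_glb_lt; lra). unfold d1. lra. }
  set (eta := 1 - d1).
  set (Cst := 2 / (d1 * q0)).
  assert (E1 := lim_get _ _ (t / 8) (JJ_lim (k + e) eta ltac:(lra) ltac:(unfold eta; lra)) ltac:(lra)).
  assert (E2 := lim_get _ _ (t / 8) (JJ_lim (k - e) eta ltac:(lra) ltac:(unfold eta; lra)) ltac:(lra)).
  assert (E3 : at_left 1 (fun l => Rabs (Cst * / (- ln (1 - l)) - 0) < t / 8)).
  { apply lim_get; [|lra]. apply (lim_eq _ (Cst * 0)). Req4. ring. apply lim_mult. apply lim_const. apply iL_lim. }
  assert (E4 : at_left 1 (fun l => eta < l < 1)).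
  { apply (at_left_ev _ 1 d1 ltac:(lra)). intros l Hl. unfold eta. lra. }
  generalize (filter_and _ _ E1 (filter_and _ _ E2 (filter_and _ _ E3 E4))).
  apply filter_imp. intros l [H1 [H2 [H3 H4]]].
  assert (Hl : 0 < l < 1) by (unfold eta in H4; lra).
  assert (HiL := iL_pos l Hl). set (iL := / (- ln (1 - l))) in *.
  assert (Heta : 0 < eta < l) by (unfold eta in *; lra).
  unfold Phi. rewrite <- (RInt_Chasles (V := R_CompleteNormedModule) _ 0 eta l).
  2:{ apply g_ex; auto; lra. } 2:{ apply g_ex; auto; lra. }
  set (A := RInt (fun v => / (1 - l * rr d K v)) 0 eta).
  set (Bv := RInt (fun v => / (1 - l * rr d K v)) eta l).
  assert (HA : 0 <= A <= Cst).
  { split.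
    - apply RInt_ge_0. lra. apply g_ex; auto; lra. intros x Hx. apply Rlt_le, Rinv_0_lt_compat.
      assert (H := den_pos1 l x Hl ltac:(lra)). lra.
    - assert (Hb := abs_RInt_le_const (fun v => / (1 - l * rr d K v)) 0 eta (/ (l * d1 * q0)) ltac:(lra)
          (g_ex l 0 eta Hl ltac:(lra) ltac:(lra))).
      assert (Hpos : 0 < l * d1 * q0) by (apply Rmult_lt_0_compat; [apply Rmult_lt_0_compat|]; lra).
      assert (Hb' : Rabs A <= (eta - 0) * / (l * d1 * q0)).
      { apply Hb. intros x Hx. rewrite (den_eq l x).
        assert (Hqx := Hq x ltac:(lra)).
        assert (Hx1 : d1 <= 1 - x) by (unfold eta in Hx; lra).
        assert (Hm : l * d1 * q0 <= l * ((1 - x) * QQ d K x)).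
        { rewrite Rmult_assoc. apply Rmult_le_compat_l. lra. apply Rmult_le_compat; lra. }
        rewrite Rabs_pos_eq.
        - apply Rinv_le_contravar; lra.
        - apply Rlt_le, Rinv_0_lt_compat; lra. }
      assert (Hi : / (l * d1 * q0) <= Cst).
      { unfold Cst, Rdiv.
        replace (/ (l * d1 * q0)) with (/ l * / (d1 * q0)) by (rewrite <- Rinv_mult; f_equal; ring).
        apply Rmult_le_compat_r. apply Rlt_le, Rinv_0_lt_compat; nra.
        apply Rle_trans with (/ (1 / 2)). apply Rinv_le_contravar; unfold eta in *; lra.
        right. field. }
      assert (0 <= / (l * d1 * q0)) by (apply Rlt_le, Rinv_0_lt_compat; lra).
      apply Rabs_le_between in Hb'. destruct Hb' as [_ Hb'].
      assert ((eta - 0) * / (l * d1 * q0) <= / (l * d1 * q0)).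
      { rewrite <- (Rmult_1_l (/ (l * d1 * q0))) at 2. apply Rmult_le_compat_r; auto. unfold eta; lra. }
      lra. }
  assert (HB : JJ (k + e) eta l <= Bv <= JJ (k - e) eta l).
  { assert (J1 := JJ_RInt (k + e) eta l ltac:(lra) Heta ltac:(lra)).
    assert (J2 := JJ_RInt (k - e) eta l ltac:(lra) Heta ltac:(lra)).
    split.
    - rewrite <- (@is_RInt_unique R_CompleteNormedModule _ _ _ _ J1).
      apply RInt_le. lra. eexists; exact J1. apply g_ex; auto; lra.
      intros x Hx. rewrite (den_eq l x).
      assert (Hx1 : 0 < 1 - x < d1) by (unfold eta in Hx; lra).
      assert (Hqx := Hd x ltac:(rewrite Rabs_left by lra; lra)). apply Rabs_lt_between in Hqx.
      assert (0 < l * (1 - x)) by nra.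
      assert (l * ((1 - x) * QQ d K x) <= l * (k + e) * (1 - x)) by nra.
      assert (0 < l * (k - e) * (1 - x)) by (replace (l * (k - e) * (1 - x)) with ((l * (1 - x)) * (k - e)) by ring; nra).
      assert (l * (k - e) * (1 - x) <= l * ((1 - x) * QQ d K x)) by nra.
      apply Rinv_le_contravar; lra.
    - rewrite <- (@is_RInt_unique R_CompleteNormedModule _ _ _ _ J2).
      apply RInt_le. lra. apply g_ex; auto; lra. eexists; exact J2.
      intros x Hx. rewrite (den_eq l x).
      assert (Hx1 : 0 < 1 - x < d1) by (unfold eta in Hx; lra).
      assert (Hqx := Hd x ltac:(rewrite Rabs_left by lra; lra)). apply Rabs_lt_between in Hqx.
      assert (0 < l * (1 - x)) by nra.
      assert (0 < l * (k - e) * (1 - x)) by (replace (l * (k - e) * (1 - x)) with ((l * (1 - x)) * (k - e)) by ring; nra).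
      assert (l * (k - e) * (1 - x) <= l * ((1 - x) * QQ d K x)) by nra.
      apply Rinv_le_contravar; lra. }
  apply Rabs_lt_between in H1. apply Rabs_lt_between in H2. apply Rabs_lt_between in H3.
  assert (P1 : A * iL <= Cst * iL) by (apply Rmult_le_compat_r; lra).
  assert (P2 : 0 <= A * iL) by (apply Rmult_le_pos; lra).
  assert (P3 : JJ (k + e) eta l * iL <= Bv * iL) by (apply Rmult_le_compat_r; lra).
  assert (P4 : Bv * iL <= JJ (k - e) eta l * iL) by (apply Rmult_le_compat_r; lra).
  unfold plus; simpl. apply Rabs_lt_between. lra.
Qed.


Lemma Eint_Phi l : 0 < l < 1 -> Eint d K l = (Phi l - l) * / l.
Proof.
  intros Hl. unfold Eint, Phi.
  assert (Hg := g_ex l 0 l Hl ltac:(lra) ltac:(lra)).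
  assert (Hc : ex_RInt (fun _ : R => 1) 0 l) by (apply (@ex_RInt_continuous R_CompleteNormedModule); intros; apply continuous_const).
  rewrite (RInt_ext _ (fun v => scal (/ l) (minus (/ (1 - l * rr d K v)) 1))).
  - rewrite (RInt_scal (V := R_CompleteNormedModule)).
    2:{ apply (@ex_RInt_minus R_NormedModule); auto. }
    rewrite (RInt_minus (V := R_CompleteNormedModule)) by auto.
    rewrite RInt_const. unfold scal, minus, plus, opp, mult; simpl. unfold mult; simpl. ring.
  - intros x Hx. rewrite Rmin_left, Rmax_right in Hx by lra.
    assert (H := den_pos1 l x Hl ltac:(lra)).
    unfold scal, minus, plus, opp, mult; simpl. unfold mult; simpl. field. split; lra.
Qed.

Lemma limit_one : filterlim (fun l => Eint d K l / (- ln (1 - l * rr d K l))) (at_left 1)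
  (locally (1 / ee d K 1)).
Proof.
  set (X := fun l => ln (1 + l * QQ d K l)).
  assert (Hk : 0 < ee d K 1) by (apply ee1_pos; auto).
  assert (Hev : at_left 1 (fun l => (Phi l * / (- ln (1 - l)) - l * / (- ln (1 - l))) * / l * / (1 - X l * / (- ln (1 - l)))
     = Eint d K l / (- ln (1 - l * rr d K l)))).
  { apply (at_left_ev _ 1 (1 / 2) ltac:(lra)). intros l Hl.
    assert (HiL := iL_pos l ltac:(lra)).
    assert (HL : - ln (1 - l) <> 0) by (intro H; rewrite H, Rinv_0 in HiL; lra).
    assert (HQ := QQ_pos d K HK HKd l ltac:(lra)).
    assert (Hp : 1 - l * rr d K l = (1 - l) * (1 + l * QQ d K l)) by (rewrite den_eq; ring).
    rewrite Hp, ln_mult by nra. rewrite Eint_Phi by lra. unfold X.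
    set (a := - ln (1 - l)) in *. set (b := ln (1 + l * QQ d K l)).
    assert (E : - (ln (1 - l) + b) = a * (1 - b * / a)).
    { rewrite Rmult_minus_distr_l, Rmult_1_r.
      replace (a * (b * / a)) with (b * (a * / a)) by ring. rewrite Rinv_r by auto. unfold a. ring. }
    rewrite E.
    unfold Rdiv. rewrite Rinv_mult. ring. }
  apply (lim_ext _ _ _ Hev).
  apply (lim_eq _ ((1 / ee d K 1 - 1 * 0) * / 1 * / (1 - ln (1 + 1 * QQ d K 1) * 0))). Req4. field. lra.
  assert (Hid : filterlim (fun l : R => l) (at_left 1) (locally 1)).
  { apply (cont_at_left (fun l => l)). apply continuous_id. }
  apply lim_mult; [apply lim_mult|].
  - apply (lim_plus _ (fun l => - (l * / (- ln (1 - l))))). apply PhiL_lim.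
    apply lim_opp. apply lim_mult. auto. apply iL_lim.
  - apply lim_inv. auto. lra.
  - apply lim_inv; [|lra]. apply (lim_plus (fun _ => 1) (fun l => - (X l * / (- ln (1 - l)))) 1 (- (ln (1 + 1 * QQ d K 1) * 0))).
    apply lim_const. apply lim_opp. apply lim_mult; [|apply iL_lim].
    apply (cont_at_left X 1). unfold X.
    apply (continuous_comp (fun l => 1 + l * QQ d K l) ln).
    + apply (continuous_plus (fun _ => 1) (fun l => l * QQ d K l)). apply continuous_const.
      apply (continuous_mult (fun l => l) (QQ d K)). apply continuous_id. apply QQ_cont.
    + apply (@ex_derive_continuous R_AbsRing R_NormedModule). auto_derive.
      rewrite (QQ1 d K HK HKd). lra.
Qed.

End One.

Theorem proposition5p2 (d K : nat) (F : R -> R -> R) :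
  (1 <= K)%nat -> (K < d)%nat ->
  (forall l, 0 < l < 1 -> solves_ode d K l (F l)) ->
  filterlim (fun l => - EW d K l (F l) / ln (p_idle d K l)) (at_right 0)
    (locally (1 / INR (d - K + 1))) /\
  filterlim (fun l => - EW d K l (F l) / ln (p_idle d K l)) (at_left 1)
    (locally (INR K / INR (d - K))).
Proof.
  intros HK HKd HF.
  assert (Heq : forall l, 0 < l < 1 ->
    Eint d K l / (- ln (1 - l * rr d K l)) = - EW d K l (F l) / ln (p_idle d K l)).
  { intros l Hl. rewrite (EW_Eint d K HK HKd l Hl (F l) (HF l Hl)), (p_idle_rr d K HK HKd).
    unfold Rdiv. rewrite Rinv_opp. ring. }
  split.
  - replace (d - K + 1)%nat with (S (d - K)) by lia.
    apply (lim_ext (fun l => Eint d K l / (- ln (1 - l * rr d K l)))).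
    + apply (at_right_ev _ 0 1 Rlt_0_1). intros l Hl. apply Heq. lra.
    + apply limit_zero; auto.
  - apply (lim_ext (fun l => Eint d K l / (- ln (1 - l * rr d K l)))).
    + apply (at_left_ev _ 1 1 Rlt_0_1). intros l Hl. apply Heq. lra.
    + apply (lim_eq _ (1 / ee d K 1)).
      * rewrite (ee1 d K HK HKd). assert (0 < INR K) by (apply lt_0_INR; lia).
        assert (0 < INR (d - K)) by (apply lt_0_INR; lia). change (@eq R (1 / (INR (d - K) / INR K)) (INR K / INR (d - K))). field. lra.
      * apply limit_one; auto.
Qed.
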